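(* Let $R$ be a commutative Noetherian ring, $M$ a faithful primeful $R$-module having at least one prime submodule, $X=\mathrm{Spec}(M)$, $N$ an $R$-module, $K\le M$, and $U=X\setminus V(K)$. If the ideal $(K:M)$ contains an $N$-sequence of length $2$, then $\mathcal{A}(N,M)(U)\cong N$.
   Context: For a submodule $L$ of an $R$-module $M$, $(L:M)=\{r\in R\mid rM\subseteq L\}$. A submodule $P$ of $M$ is prime if $P\neq M$ and whenever $rm\in P$ ($r\in R$, $m\in M$) then $r\in (P:M)$ or $m\in P$. $\mathrm{Spec}(M)$ is the set of prime submodules. $M$ is faithful if $\mathrm{Ann}_R(M)=0$; primeful if $M=0$ or $\mathrm{Spec}(M)\to\mathrm{Spec}(R/\mathrm{Ann}(M))$, $P\mapsto(P:M)/\mathrm{Ann}(M)$, is surjective. For $L\le M$, $V(L)=\{P\in X\mid (P:M)\supseteq (L:M)\}$; these are the closed sets of the Zariski topology. For open $U\subseteq X$, $\mathrm{Supp}(U)=\{(P:M)\mid P\in U\}$. $\mathcal{A}(N,M)(U)$ is the $R$-module of families $(\gamma_{\mathfrak p})_{\mathfrak p\in\mathrm{Supp}(U)}\in\prod_{\mathfrak p\in\mathrm{Supp}(U)}N_{\mathfrak p}$ such that for each $Q\in U$ there exist an open neighbourhood $W\subseteq U$ of $Q$ and $s\in R$, $m\in N$ with $s\notin(P:M)$ and $\gamma_{(P:M)}=m/s$ for every $P\in W$. A sequence $a_1,\dots,a_n\in R$ is an $N$-sequence if $a_i$ is a non-zero-divisor on $N/(a_1,\dots,a_{i-1})N$ for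 each $i$ and $N/(a_1,\dots,a_n)N\neq0$. *)

(* Defs.v *)
From HB Require Import structures.
From mathcomp Require Import all_boot all_order all_algebra.
Set Implicit Arguments. Unset Strict Implicit. Unset Printing Implicit Defensive.
Import GRing.Theory.
Local Open Scope ring_scope.

Section Defs.
Variable R : comPzRingType.

Definition ideal (I : R -> Prop) : Prop :=
  I 0 /\ (forall a b, I a -> I b -> I (a + b)) /\ (forall r a, I a -> I (r * a)).

Definition prime_ideal (p : R -> Prop) : Prop :=
  ideal p /\ ~ p 1 /\ (forall a b, p (a * b) -> p a \/ p b).

Definition noetherian_ring : Prop :=
  forall I : nat -> R -> Prop,
    (forall n, ideal (I n)) ->
    (forall n r, I n r -> I n.+1 r) ->
    exists n, forall m, (n <= m)%N -> forall r, I m r <-> I n r.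

Section Module.
Variable M : lmodType R.

Definition submodule (L : M -> Prop) : Prop :=
  L 0 /\ (forall x y, L x -> L y -> L (x + y)) /\ (forall r x, L x -> L (r *: x)).

Definition colon (L : M -> Prop) : R -> Prop := fun r => forall m, L (r *: m).

Definition prime_submodule (P : M -> Prop) : Prop :=
  submodule P /\ (exists m, ~ P m) /\
  (forall r m, P (r *: m) -> colon P r \/ P m).

Definition ann : R -> Prop := fun r => forall m : M, r *: m = 0.

Definition faithful : Prop := forall r, ann r -> r = 0.

(* primeful: M = 0, or P |-> (P:M)/Ann(M) is onto Spec(R/Ann(M)); prime
   ideals of R/Ann(M) are identified with the prime ideals of R containing
   Ann(M) (correspondence theorem). *)
Definition primeful : Prop :=
  (forall m : M, m = 0) \/
  (forall p, prime_ideal p -> (forall r, ann r -> p r) ->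
     exists P, prime_submodule P /\ colon P = p).

Definition VZ (L : M -> Prop) : (M -> Prop) -> Prop :=
  fun P => prime_submodule P /\ (forall r, colon L r -> colon P r).

Definition zopen (U : (M -> Prop) -> Prop) : Prop :=
  exists L, submodule L /\
    forall P, U P <-> (prime_submodule P /\ ~ VZ L P).

Definition Supp (U : (M -> Prop) -> Prop) : (R -> Prop) -> Prop :=
  fun p => exists P, U P /\ colon P = p.

Section Sheaf.
Variable N : lmodType R.

(* Elements of the localization N_p are represented by fractions m/s, i.e.
   pairs (m, s) with s ∉ p, up to the usual equivalence:
   m/s = m'/s' in N_p  iff  exists t ∉ p, t (s' m - s m') = 0. *)
Definition loc_eq (p : R -> Prop) (x y : N * R) : Prop :=
  exists t, ~ p t /\ t *: (y.2 *: x.1 - x.2 *: y.1) = 0.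

Definition frac_add (x y : N * R) : N * R :=
  (y.2 *: x.1 + x.2 *: y.1, x.2 * y.2).
Definition frac_scale (r : R) (x : N * R) : N * R := (r *: x.1, x.2).

(* gamma is an element of A(N,M)(U): a family (gamma_p)_{p in Supp U},
   gamma_p in N_p (given by a representative fraction), locally of the
   form m/s. *)
Definition A_section (U : (M -> Prop) -> Prop)
    (gamma : (R -> Prop) -> N * R) : Prop :=
  (forall p, Supp U p -> ~ p (gamma p).2) /\
  (forall Q, U Q ->
     exists W : (M -> Prop) -> Prop,
       zopen W /\ (forall P, W P -> U P) /\ W Q /\
       exists (s : R) (m : N), forall P, W P ->
         ~ colon P s /\ loc_eq (colon P) (gamma (colon P)) (m, s)).

(* A(N,M)(U) ≅ N as R-modules: there is an R-linear bijection from N onto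
   A(N,M)(U), where A(N,M)(U) carries the componentwise module structure and
   two sections are equal iff they agree in every N_p, p in Supp U. *)
Definition A_iso_N (U : (M -> Prop) -> Prop) : Prop :=
  exists phi : N -> ((R -> Prop) -> N * R),
    (forall n, A_section U (phi n)) /\
    (forall x y p, Supp U p -> loc_eq p (phi (x + y) p) (frac_add (phi x p) (phi y p))) /\
    (forall r x p, Supp U p -> loc_eq p (phi (r *: x) p) (frac_scale r (phi x p))) /\
    (forall x y, (forall p, Supp U p -> loc_eq p (phi x p) (phi y p)) -> x = y) /\
    (forall gamma, A_section U gamma ->
       exists n, forall p, Supp U p -> loc_eq p (phi n p) (gamma p)).

Definition seq_submod (s : seq R) (i : nat) : N -> Prop :=
  fun x => exists y : nat -> N, x = \sum_(j < i) s`_j *: y j.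

Definition N_sequence (s : seq R) : Prop :=
  (forall i, (i < size s)%N ->
     forall x : N, seq_submod s i (s`_i *: x) -> seq_submod s i x) /\
  (exists x : N, ~ seq_submod s (size s) x).

End Sheaf.
End Module.
End Defs.

(* Main.v *)
Require Import Defs.
From HB Require Import structures.
From mathcomp Require Import all_boot all_order all_algebra.
From mathcomp Require Import ring.
From Stdlib Require Import ClassicalEpsilon Classical.
Set Implicit Arguments. Unset Strict Implicit. Unset Printing Implicit Defensive.
Import GRing.Theory.
Local Open Scope ring_scope.

Lemma choice' (A B : Type) (P : A -> B -> Prop) :
  (forall a, exists b, P a b) -> exists f : A -> B, forall a, P a (f a).
Proof.
move=> H; exists (fun a => proj1_sig (constructive_indefinite_description _ (H a))).
move=> a; exact: (proj2_sig (constructive_indefinite_description _ (H a))).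
Qed.

Lemma choice_lt (B : Type) (b0 : B) (n : nat) (P : nat -> B -> Prop) :
  (forall i, (i < n)%N -> exists b, P i b) ->
  exists f : nat -> B, forall i, (i < n)%N -> P i (f i).
Proof.
move=> H.
have [f Hf] : exists f : nat -> B, forall i, (i < n)%N -> P i (f i).
  apply: (@choice' nat B (fun i b => (i < n)%N -> P i b)) => i.
  case: (ltnP i n) => Hi; first by have [b Hb] := H i Hi; exists b.
  by exists b0.
by exists f.
Qed.

Lemma unif_bound (n : nat) (P : nat -> nat -> Prop) :
  (forall i, (i < n)%N -> exists e, forall e', (e <= e')%N -> P i e') ->
  exists E, forall i, (i < n)%N -> forall e', (E <= e')%N -> P i e'.
Proof.
elim: n => [|n IH] H; first by exists 0%N.
have [E1 HE1] : exists E, forall i, (i < n)%N -> forall e', (E <= e')%N -> P i e'.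
  by apply: IH => i Hi; apply: H; apply: ltnW.
have [E2 HE2] := H n (ltnSn n).
exists (maxn E1 E2) => i Hi e' He.
rewrite ltnS leq_eqVlt in Hi; case/orP: Hi => [/eqP -> | Hi].
  by apply: HE2; apply: leq_trans He; apply: leq_maxr.
by apply: HE1 => //; apply: leq_trans He; apply: leq_maxl.
Qed.

Section Ring.
Variable R : comPzRingType.

Definition rspan (S : R -> Prop) (x : R) : Prop :=
  exists (n : nat) (c g : nat -> R), (forall i, (i < n)%N -> S (g i)) /\
    x = \sum_(i < n) c i * g i.

Lemma span_ideal S : ideal (rspan S).
Proof.
split; first by exists 0%N, (fun _ => 0), (fun _ => 0); split => //; rewrite big_ord0.
split.
  move=> x y [n1 [c1 [g1 [H1 ->]]]] [n2 [c2 [g2 [H2 ->]]]].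
  exists (n1 + n2)%N, (fun i => if (i < n1)%N then c1 i else c2 (i - n1)%N),
    (fun i => if (i < n1)%N then g1 i else g2 (i - n1)%N); split.
    move=> i Hi; case: ifP => Hi1; first by apply: H1.
    apply: H2; move: Hi1 => /negbT; rewrite -leqNgt => Hi1.
    by rewrite ltn_subLR.
  rewrite big_split_ord /=; congr (_ + _); apply: eq_bigr => i _ /=.
    by rewrite ltn_ord.
  by rewrite ltnNge leq_addr /= addKn.
move=> r x [n [c [g [H ->]]]]; exists n, (fun i => r * c i), g; split => //.
by rewrite mulr_sumr; apply: eq_bigr => i _; rewrite mulrA.
Qed.

Lemma span_sub S x : S x -> rspan S x.
Proof.
move=> Hx; exists 1%N, (fun _ => 1), (fun _ => x); split => //.
by rewrite big_ord1 mul1r.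
Qed.

Lemma ideal_sum (q : R -> Prop) n (c g : nat -> R) :
  ideal q -> (forall i, (i < n)%N -> q (g i)) -> q (\sum_(i < n) c i * g i).
Proof.
move=> [H0 [HD HM]]; elim: n => [|n IH] H; first by rewrite big_ord0.
rewrite big_ord_recr /=; apply: HD; last by apply: HM; apply: H.
by apply: IH => i Hi; apply: H; apply: ltnW.
Qed.

Lemma prime_not_mul (q : R -> Prop) a b : prime_ideal q -> ~ q a -> ~ q b -> ~ q (a * b).
Proof. by move=> [_ [_ Hp]] Ha Hb /Hp []. Qed.

Lemma prime_not_pow (q : R -> Prop) a k : prime_ideal q -> ~ q a -> ~ q (a ^+ k).
Proof.
move=> Hq Ha; elim: k => [|k IH]; first by rewrite expr0; case: Hq => _ [].
by rewrite exprS; apply: prime_not_mul.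
Qed.

Lemma prime_pow_inv (q : R -> Prop) a k : ideal q -> ~ q (a ^+ k.+1) -> ~ q a.
Proof. by move=> [_ [_ HM]] H Ha; apply: H; rewrite exprSr; apply: HM. Qed.

Lemma prime_sum_not (q : R -> Prop) n (c g : nat -> R) :
  ideal q -> ~ q (\sum_(i < n) c i * g i) -> exists i, (i < n)%N /\ ~ q (g i).
Proof.
move=> Hq H; apply: NNPP => Hn; apply: H; apply: (ideal_sum c Hq) => i Hi.
by apply: NNPP => Hgi; apply: Hn; exists i.
Qed.

Lemma PL (S : R -> Prop) (c : R) : noetherian_ring R ->
  (forall q, prime_ideal q -> ~ q c -> exists f, S f /\ ~ q f) ->
  exists k, rspan S (c ^+ k).
Proof.
move=> Hnoeth Hcov; apply: NNPP => Hno.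
have Hno' : forall k, ~ rspan S (c ^+ k) by move=> k Hk; apply: Hno; exists k.
pose F (J : R -> Prop) := ideal J /\ (forall x, rspan S x -> J x) /\ (forall k, ~ J (c ^+ k)).
have F0 : F (rspan S) by split; [apply: span_ideal | split].
have [J [FJ Jmax]] : exists J, F J /\ forall J', F J' -> (forall x, J x -> J' x) ->
    forall x, J' x -> J x.
  apply: NNPP => Hnm.
  have Hnext : forall J : {J | F J}, exists J' : {J | F J},
      (forall x, sval J x -> sval J' x) /\ exists x, sval J' x /\ ~ sval J x.
    move=> [J FJ] /=; apply: NNPP => HJ; apply: Hnm; exists J; split => // J' FJ' Hsub x Hx.
    apply: NNPP => Hnx; apply: HJ; exists (exist F J' FJ') => /=; split => //.
    by exists x.
  have [next Hn] := choice' Hnext.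
  pose ch n := iter n next (exist _ (rspan S) F0).
  have [n Hn'] := Hnoeth (fun n => sval (ch n))
     (fun n => proj1 (proj2_sig (ch n))) (fun n r => proj1 (Hn (ch n)) r).
  have [_ [x [Hx1 Hx2]]] := Hn (ch n).
  by apply: Hx2; have := (Hn' n.+1 (leqnSn n) x); rewrite /ch /= => <-.
case: (FJ) => [[J0 [JD JM]] [JS Jc]].
have Jprime : prime_ideal J.
  split; first by case: FJ.
  split; first by move=> J1; apply: (Jc 0%N); rewrite expr0.
  move=> x y Hxy; apply: NNPP => Hn.
  have Hnx : ~ J x by move=> Hx; apply: Hn; left.
  have Hny : ~ J y by move=> Hy; apply: Hn; right.
  have Hgen : forall z, ~ J z -> exists k j r, J j /\ c ^+ k = j + r * z.
    move=> z Hz; apply: NNPP => Hk.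
    pose Jz w := exists j r, J j /\ w = j + r * z.
    have FJz : F Jz.
      split.
        split; first by exists 0, 0; rewrite mul0r addr0.
        split.
          move=> u v [j1 [r1 [H1 ->]]] [j2 [r2 [H2 ->]]]; exists (j1 + j2), (r1 + r2).
          by split; [apply: (JD) | ring].
        move=> r u [j1 [r1 [H1 ->]]]; exists (r * j1), (r * r1).
        by split; [apply: (JM) | ring].
      split.
        by move=> u Hu; exists u, 0; split; [apply: (JS) | rewrite mul0r addr0].
      by move=> k [j [r [H1 H2]]]; apply: Hk; exists k, j, r.
    apply: Hz; apply: (Jmax Jz FJz).
      by move=> u Hu; exists u, 0; rewrite mul0r addr0.
    by exists 0, 1; rewrite mul1r add0r.
  have [k1 [j1 [r1 [H1 E1]]]] := Hgen x Hnx.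
  have [k2 [j2 [r2 [H2 E2]]]] := Hgen y Hny.
  apply: (Jc (k1 + k2)%N); rewrite exprD E1 E2.
  have -> : (j1 + r1 * x) * (j2 + r2 * y) = j1 * (j2 + r2 * y) + (r1 * x * j2 + r1 * r2 * (x * y)) by ring.
  apply: (JD).
    by rewrite mulrC; apply: (JM).
  by apply: (JD); [apply: (JM) | apply: (JM)].
have [f [Sf Jf]] := Hcov J Jprime (fun Hc => Jc 1%N (ltac:(by rewrite expr1))).
by apply: Jf; apply: (JS); apply: span_sub.
Qed.

End Ring.

Section Loc.
Variable R : comPzRingType.
Variable N : lmodType R.

Lemma scalerC (r s : R) (x : N) : r *: (s *: x) = s *: (r *: x).
Proof. by rewrite !scalerA mulrC. Qed.

Lemma loc_of_eq (p : R -> Prop) (x y : N * R) : ~ p 1 -> y.2 *: x.1 = x.2 *: y.1 -> loc_eq p x y.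
Proof. by move=> H1 E; exists 1; split => //; rewrite E subrr scaler0. Qed.

Lemma loc_refl (p : R -> Prop) (x : N * R) : ~ p 1 -> loc_eq p x x.
Proof. by move=> H1; apply: loc_of_eq. Qed.

Lemma loc_sym (p : R -> Prop) (x y : N * R) : loc_eq p x y -> loc_eq p y x.
Proof.
move=> [t [Ht E]]; exists t; split => //.
by rewrite -opprB scalerN E oppr0.
Qed.

Lemma loc_trans (p : R -> Prop) (x y z : N * R) : prime_ideal p -> ~ p y.2 ->
  loc_eq p x y -> loc_eq p y z -> loc_eq p x z.
Proof.
case: x => x1 x2; case: y => y1 y2; case: z => z1 z2 /= Hp Hy [t1 [Ht1 E1]] [t2 [Ht2 E2]] /=.
exists (t1 * t2 * y2); split.
  by apply: prime_not_mul => //; apply: prime_not_mul.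
have Id : y2 *: (z2 *: x1 - x2 *: z1) =
    z2 *: (y2 *: x1 - x2 *: y1) + x2 *: (z2 *: y1 - y2 *: z1).
  rewrite !scalerBr !scalerA [z2 * x2]mulrC [y2 * z2]mulrC [y2 * x2]mulrC.
  by rewrite addrA subrK.
rewrite -scalerA Id scalerDr !scalerA.
rewrite (_ : t1 * t2 * z2 = (t2 * z2) * t1); last by ring.
rewrite (_ : t1 * t2 * x2 = (t1 * x2) * t2); last by ring.
by rewrite -!scalerA E1 E2 !scaler0 addr0.
Qed.

Lemma loc_trans3 (p : R -> Prop) (x y z w : N * R) : prime_ideal p -> ~ p y.2 -> ~ p z.2 ->
  loc_eq p x y -> loc_eq p y z -> loc_eq p z w -> loc_eq p x w.
Proof.
move=> Hp Hy Hz H1 H2 H3; apply: (loc_trans Hp Hz) H3.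
exact: (loc_trans Hp Hy).
Qed.

End Loc.

Section Main.
Variables (R : comPzRingType) (M N : lmodType R) (K : M -> Prop).
Hypotheses (Hnoeth : noetherian_ring R) (Hfaith : faithful M) (Hpf : primeful M) (HK : submodule K).
Variables (a b : R).
Hypotheses (HaK : colon K a) (HbK : colon K b)
  (areg : forall x : N, a *: x = 0 -> x = 0)
  (breg : forall x w : N, b *: x = a *: w -> exists v, x = a *: v).

Let U := fun P : M -> Prop => prime_submodule P /\ ~ VZ K P.
Let Up := Supp U.

Lemma not_mul_l (q : R -> Prop) x y : ideal q -> ~ q (x * y) -> ~ q x.
Proof. by move=> [_ [_ HM]] H Hx; apply: H; rewrite mulrC; apply: HM. Qed.
Lemma not_mul_r (q : R -> Prop) x y : ideal q -> ~ q (x * y) -> ~ q y.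
Proof. by move=> [_ [_ HM]] H Hx; apply: H; apply: HM. Qed.

Lemma colon_prime (P : M -> Prop) : prime_submodule P -> prime_ideal (colon P).
Proof.
move=> [[P0 [PD PZ]] [[m0 Hm0] Hpr]].
split.
  split; first by move=> m; rewrite scale0r.
  split; first by move=> x y Hx Hy m; rewrite scalerDl; apply: PD.
  by move=> r x Hx m; rewrite -scalerA; apply: PZ.
split; first by move=> H1; apply: Hm0; have := H1 m0; rewrite scale1r.
move=> x y Hxy; case: (classic (colon P x)) => Hx; [by left | right].
move=> m; have := Hpr x (y *: m); rewrite scalerA => /(_ (Hxy m)).
by case.
Qed.

Lemma Up_prime q : Up q -> prime_ideal q.
Proof. by move=> [P [[HP _] <-]]; apply: colon_prime. Qed.

Lemma Up_of q c : prime_ideal q -> colon K c -> ~ q c -> Up q.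
Proof.
move=> Hq Hc Hqc; case: Hpf => [Hz | Hs].
  exfalso; have E : (1 : R) = 0 by apply: Hfaith => m; apply: Hz.
  by case: Hq => [[H0 _] [H1 _]]; apply: H1; rewrite E.
have Hq0 : q 0 by case: Hq => [[H0 _] _].
have [P [HP EP]] := Hs q Hq (fun r Hr => ltac:(by rewrite (Hfaith Hr))).
exists P; split => //; split => //.
by move=> [_ HV]; apply: Hqc; rewrite -EP; apply: HV.
Qed.

Lemma a_pow_reg k (x : N) : a ^+ k *: x = 0 -> x = 0.
Proof.
elim: k x => [|k IH] x; first by rewrite expr0 scale1r.
by rewrite exprS -scalerA => /areg /IH.
Qed.

Lemma L1 (z : N) c : (forall q, prime_ideal q -> ~ q c -> exists t, ~ q t /\ t *: z = 0) ->
  exists k, c ^+ k *: z = 0.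
Proof.
move=> H; have [k [n [co [g [Hg Ek]]]]] := @PL R (fun t : R => t *: z = 0) c Hnoeth (fun q Hq Hqc => let: ex_intro t (conj H1 H2) := H q Hq Hqc in ex_intro _ t (conj H2 H1)).
exists k; rewrite Ek scaler_suml big1 // => i _.
by rewrite -scalerA Hg // scaler0.
Qed.

Lemma L1a (z : N) f :
  (forall q, prime_ideal q -> ~ q f -> ~ q a -> exists t, ~ q t /\ t *: z = 0) ->
  exists k, f ^+ k *: z = 0.
Proof.
move=> H; have [k Hk] : exists k, (f * a) ^+ k *: z = 0.
  apply: L1 => q Hq Hfa; apply: H => //.
    by apply: (not_mul_l (y := a)) => //; case: Hq.
  by apply: (not_mul_r (x := f)) => //; case: Hq.
exists k; apply: (@a_pow_reg k).
by rewrite scalerA -exprMn mulrC.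
Qed.

Lemma breg_pow1 k (x w : N) : b *: x = a ^+ k *: w -> exists v, x = a ^+ k *: v.
Proof.
elim: k x w => [|k IH] x w.
  by move=> _; exists x; rewrite expr0 scale1r.
move=> Hx.
have [x1 Ex1] : exists x1, x = a ^+ k *: x1.
  by apply: (IH x (a *: w)); rewrite scalerA -exprSr.
have : a ^+ k *: (b *: x1 - a *: w) = 0.
  by rewrite scalerBr scalerC -Ex1 Hx scalerA exprSr subrr.
move/a_pow_reg/eqP; rewrite subr_eq0 => /eqP /breg [x2 Ex2].
by exists x2; rewrite Ex1 Ex2 scalerA -exprSr.
Qed.

Lemma breg_pow l k (x w : N) : b ^+ l *: x = a ^+ k *: w -> exists v, x = a ^+ k *: v.
Proof.
elim: l x w => [|l IH] x w; first by rewrite expr0 scale1r => ->; exists w.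
rewrite exprSr -scalerA => /IH [v Ev].
exact: (breg_pow1 Ev).
Qed.

Section Sec.
Variable gamma : (R -> Prop) -> N * R.
Hypothesis Hg : A_section U gamma.

Definition good f := exists m, forall q, Up q -> ~ q f -> loc_eq q (m, f) (gamma q).

Lemma gamma_den q : Up q -> ~ q (gamma q).2.
Proof. by case: Hg => H _; apply: H. Qed.

Lemma LG p : Up p -> exists f, ~ p f /\ good f.
Proof.
move=> [Q [UQ <-]].
have [W [[L [HL HW]] [WU [WQ [s [m Hd]]]]]] := proj2 Hg Q UQ.
have [PQ NVQ] := (proj1 (HW Q) WQ).
have [j [Hj1 Hj2]] : exists j, colon L j /\ ~ colon Q j.
  apply: NNPP => Hn; apply: NVQ; split => // r Hr.
  by apply: NNPP => Hr'; apply: Hn; exists r.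
have [Hs _] := Hd Q WQ.
have HpQ := colon_prime PQ.
exists (j * s); split; first by apply: prime_not_mul.
exists (j *: m) => q [P [UP EP]] Hq.
have HqP : prime_ideal q by rewrite -EP; apply: colon_prime; case: UP.
have Hjq : ~ q j by apply: (not_mul_l (y := s)) => //; case: HqP.
have WP : W P.
  apply/HW; split; first by case: UP.
  by move=> [_ HV]; apply: Hjq; rewrite -EP; apply: HV.
have [Hs' Hl] := Hd P WP; rewrite EP in Hs' Hl.
apply: (loc_trans (y := (m, s))) => //.
  apply: loc_of_eq; first by case: HqP => _ [].
  by rewrite /= scalerA mulrC.
exact: loc_sym.
Qed.

Lemma step1 c : colon K c ->
  exists (x : N) k, forall q, prime_ideal q -> ~ q c -> loc_eq q (x, c ^+ k) (gamma q).
Proof.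
move=> Hc.
have [K0 [r [coef [g [Hgood Ec]]]]] : exists k, rspan good (c ^+ k).
  apply: PL Hnoeth _ => q Hq Hqc.
  by have [f [Hf Gf]] := LG (Up_of Hq Hc Hqc); exists f.
have [mm Hmm] := choice_lt 0
  (P := fun i m => forall q, Up q -> ~ q (g i) -> loc_eq q (m, g i) (gamma q)) Hgood.
have Hpair : forall i j, (i < r)%N -> (j < r)%N ->
    exists e, (g i * g j) ^+ e *: (g j *: mm i - g i *: mm j) = 0.
  move=> i j Hi Hj; apply: L1a => q Hq Hgij Hqa.
  have Hgi : ~ q (g i) by apply: (not_mul_l (y := g j)) => //; case: Hq.
  have Hgj : ~ q (g j) by apply: (not_mul_r (x := g i)) => //; case: Hq.
  have Uq := Up_of Hq HaK Hqa.
  have := loc_trans Hq (gamma_den Uq) (Hmm i Hi q Uq Hgi) (loc_sym (Hmm j Hj q Uq Hgj)).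
  by [].
have mono : forall (x : R) (z : N) e e', x ^+ e *: z = 0 -> (e <= e')%N -> x ^+ e' *: z = 0.
  move=> x z e e' H He; rewrite -(subnK He) exprD -scalerA H scaler0 //.
have [E HE] : exists E, forall i, (i < r)%N -> forall e', (E <= e')%N -> forall j, (j < r)%N ->
    (g i * g j) ^+ e' *: (g j *: mm i - g i *: mm j) = 0.
  apply: unif_bound => i Hi.
  have [Ei HEi] : exists E, forall j, (j < r)%N -> forall e', (E <= e')%N ->
      (g i * g j) ^+ e' *: (g j *: mm i - g i *: mm j) = 0.
    apply: unif_bound => j Hj; have [e He] := Hpair i j Hi Hj.
    by exists e => e' He'; apply: mono He He'.
  by exists Ei => e' He' j Hj; apply: HEi.
pose gg i := g i ^+ E.+1.
pose nn i := g i ^+ E *: mm i.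
have Hcomp : forall i j, (i < r)%N -> (j < r)%N -> gg j *: nn i = gg i *: nn j.
  move=> i j Hi Hj; have := HE i Hi E (leqnn E) j Hj.
  rewrite scalerBr !scalerA => /eqP; rewrite subr_eq0 => /eqP Eij.
  rewrite /gg.
  rewrite (_ : g j ^+ E.+1 * g i ^+ E = (g i * g j) ^+ E * g j); last by rewrite exprMn exprS; ring.
  rewrite Eij; congr (_ *: _); rewrite exprMn exprS; ring.
have Hloc : forall i, (i < r)%N -> forall q, Up q -> ~ q (g i) -> loc_eq q (nn i, gg i) (gamma q).
  move=> i Hi q Uq Hgi; have Hq := Up_prime Uq.
  apply: (loc_trans (y := (mm i, g i))) => //; last by apply: Hmm.
  apply: loc_of_eq; first by case: Hq => _ [].
  by rewrite /= /nn /gg scalerA -exprS.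
have [K1 [r' [d [h [Hh Ec']]]]] : exists k, rspan (fun h => exists i, (i < r)%N /\ h = gg i) (c ^+ k).
  apply: PL Hnoeth _ => q Hq Hqc.
  have := prime_not_pow (k := K0) Hq Hqc; rewrite Ec => /(prime_sum_not (proj1 Hq)) [i [Hi Hgi]].
  exists (gg i); split; first by exists i.
  exact: prime_not_pow.
have [idx Hidx] := choice_lt 0%N Hh.
exists (\sum_(l < r') d l *: nn (idx l)), K1 => q Hq Hqc.
have := prime_not_pow (k := K1) Hq Hqc; rewrite Ec' => /(prime_sum_not (proj1 Hq)) [l [Hl Hhl]].
have [Hil Ehl] := Hidx l Hl; rewrite Ehl in Hhl.
have Hgi : ~ q (g (idx l)) by apply: (prime_pow_inv (k := E)) => //; case: Hq.
have Uq := Up_of Hq Hc Hqc.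
apply: (loc_trans (y := (nn (idx l), gg (idx l)))) => //; last by apply: Hloc.
apply: loc_of_eq; first by case: Hq => _ [].
rewrite /= scaler_suml scaler_sumr; apply: eq_bigr => l' _.
have [Hil' Ehl'] := Hidx l' (ltn_ord l').
by rewrite Ehl' scalerC Hcomp // scalerA.
Qed.

Lemma surj : exists n : N, forall p, Up p -> loc_eq p (n, 1) (gamma p).
Proof.
have [x [ka Hx]] := step1 HaK.
have [y [kb Hy]] := step1 HbK.
have [e He] : exists e, (a * b) ^+ e *: (b ^+ kb *: x - a ^+ ka *: y) = 0.
  apply: L1 => q Hq Hab.
  have Hqa : ~ q a by apply: (not_mul_l (y := b)) => //; case: Hq.
  have Hqb : ~ q b by apply: (not_mul_r (x := a)) => //; case: Hq.
  have Uq := Up_of Hq HaK Hqa.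
  exact: (loc_trans Hq (gamma_den Uq) (Hx q Hq Hqa) (loc_sym (Hy q Hq Hqb))).
move: He; rewrite exprMn -scalerA => /a_pow_reg.
rewrite scalerBr !scalerA => /eqP; rewrite subr_eq0 => /eqP Ee.
have [n En] : exists n, x = a ^+ ka *: n.
  apply: (breg_pow (l := (e + kb)%N) (w := b ^+ e *: y)).
  by rewrite exprD Ee scalerA mulrC.
exists n => p Up_p.
have Hp := Up_prime Up_p.
have [f [Hpf' [m Hm]]] := LG Up_p.
have [k Hk] : exists k, f ^+ k *: (f *: n - 1 *: m) = 0.
  apply: L1a => q Hq Hqf Hqa.
  have Uq := Up_of Hq HaK Hqa.
  have H1 : loc_eq q (n, 1) (x, a ^+ ka).
    apply: loc_of_eq; first by case: Hq => _ [].
    by rewrite /= scale1r En.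
  have HH : loc_eq q (n, 1) (m, f).
    apply: (loc_trans3 (y := (x, a ^+ ka)) (z := gamma q) Hq) => //.
    - exact: prime_not_pow.
    - exact: gamma_den.
    - exact: Hx.
    - exact: loc_sym (Hm q Uq Hqf).
  by case: HH => t [Ht Et]; exists t.
apply: (loc_trans (y := (m, f))) => //; last by apply: Hm.
by exists (f ^+ k); split => //; apply: prime_not_pow.
Qed.

End Sec.

Lemma inj (x y : N) : (forall p, Up p -> loc_eq p (x, 1) (y, 1)) -> x = y.
Proof.
move=> H; have [k Hk] : exists k, a ^+ k *: (1 *: x - 1 *: y) = 0.
  apply: L1 => q Hq Hqa; exact: (H q (Up_of Hq HaK Hqa)).
by move: Hk => /a_pow_reg /eqP; rewrite !scale1r subr_eq0 => /eqP.
Qed.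

Lemma iso_main : A_iso_N N U.
Proof.
exists (fun n _ => (n, 1)); split.
  move=> n; split; first by move=> p /Up_prime [_ []].
  move=> Q UQ; exists U; split.
    exists K; split; last by [].
    exact: HK.
  split => //; split => //; exists 1, n => P UP; split.
    by have [_ []] := colon_prime (proj1 UP).
  by apply: loc_refl; have [_ []] := colon_prime (proj1 UP).
split.
  move=> x y p Up_p; apply: loc_of_eq; first by have [_ []] := Up_prime Up_p.
  by rewrite /frac_add /= mulr1 !scale1r.
split.
  move=> r x p Up_p; apply: loc_refl; by have [_ []] := Up_prime Up_p.
split; first by move=> x y; apply: inj.
by move=> gamma Hg; apply: surj.
Qed.

End Main.

Unset Implicit Arguments.
Theorem corollary3p18 (R : comPzRingType) (M N : lmodType R)
    (K : M -> Prop) :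
  noetherian_ring R ->
  faithful M -> primeful M ->
  (exists P : M -> Prop, prime_submodule P) ->
  submodule K ->
  (exists s : seq R, size s = 2%N /\ (forall a, a \in s -> colon K a) /\
     N_sequence N s) ->
  A_iso_N N (fun P => prime_submodule P /\ ~ VZ K P).
Proof.
move=> Hnoeth Hfaith Hpf _ HK [s [Hs [HsK [Hreg _]]]].
case: s Hs HsK Hreg => [|a [|b [|? ?]]] // _ HsK Hreg.
have HaK : colon K a by apply: HsK; rewrite mem_head.
have HbK : colon K b by apply: HsK; rewrite !inE eqxx orbT.
apply: (@iso_main R M N K Hnoeth Hfaith Hpf HK a b HaK HbK).
  move=> x Hx; have [y Ey] := Hreg 0%N (ltac:(by [])) x
    (ltac:(by exists (fun _ => 0); rewrite big_ord0)).
  by rewrite Ey big_ord0.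
move=> x w Hxw; have [y Ey] := Hreg 1%N (ltac:(by [])) x
  (ltac:(by exists (fun _ => w); rewrite big_ord1)).
by exists (y 0%N); rewrite Ey big_ord1.
Qed.
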